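(* Let $L\subseteq B_i$ be an SINR-feasible set of links contained in a single bucket $B_i$. Then there is a constant $C$ depending only on $\alpha,\beta,\varepsilon$ such that for every $e\in B_i$, \[\sum_{\{e'\in L:d_{e'}\ge d_e\}}\bar a_e(e')\le C.\]
   Context: Constants: $\alpha\ge0$, $N>0$, $\beta>0$. Nodes lie in the Euclidean plane. A link is $e=(s_e,r_e,P_e)$ with transmitter, receiver, power $P_e>0$; $\mathcal{L}$ is the set of links. $d_e=d(s_e,r_e)$, $d_{e'e}=d(s_{e'},r_e)$, $S_e=P_e/d_e^\alpha$, $S_{e'e}=P_{e'}/d_{e'e}^\alpha$, $\gamma_e=\beta S_e/(S_e-\beta N)$. Affectances: $\hat a_{e'}(e)=S_{e'e}/S_e$, $a_{e'}(e)=\gamma_e\hat a_{e'}(e)$, $\bar a_{e'}(e)=\min\{1,a_{e'}(e)\}$. $L$ is SINR-feasible if $S_e/(N+\sum_{e'\in L\setminus\{e\}}S_{e'e})\ge\beta$ for all $e\in L$. Buckets: $S_{\min}=\min_{e\in\mathcal{L}}S_e$, $B_i=\{e\in\mathcal{L}:2^iS_{\min}\le S_e<2^{i+1}S_{\min}\}$. Standing assumption: there is a constant $\varepsilon>0$ with $S_e/N\ge(1+\varepsilon)\beta$ for all $e\in\mathcal{L}$. *)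

(* Defs.v *)
From HB Require Import structures.
From mathcomp Require Import all_boot all_order all_algebra.
From mathcomp Require Import all_classical all_reals all_analysis.
Set Implicit Arguments. Unset Strict Implicit. Unset Printing Implicit Defensive.
Import Order.TTheory GRing.Theory Num.Theory.
Local Open Scope ring_scope.

Section SINR.
Variables (R : realType) (T : finType).
(* constants alpha (path loss), beta (threshold), N (noise) *)
Variables (alpha beta N : R).
(* links are the elements of the finite type T: transmitter s e,
   receiver r e (points of the Euclidean plane R*R), power P e *)
Variables (s r : T -> R * R) (P : T -> R).

Definition dist (p q : R * R) : R :=
  Num.sqrt ((p.1 - q.1) ^+ 2 + (p.2 - q.2) ^+ 2).

Definition dlen (e : T) : R := dist (s e) (r e).
Definition Ssig (e : T) : R := P e / (dlen e `^ alpha).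
Definition Sint (e' e : T) : R := P e' / (dist (s e') (r e) `^ alpha).
Definition gammae (e : T) : R := beta * Ssig e / (Ssig e - beta * N).
Definition ahat (e' e : T) : R := Sint e' e / Ssig e.
Definition aff (e' e : T) : R := gammae e * ahat e' e.
Definition abar (e' e : T) : R := Num.min 1 (aff e' e).

Definition feasible (L : {set T}) : Prop :=
  forall e, e \in L ->
    beta <= Ssig e / (N + \sum_(e' in L | e' != e) Sint e' e).

(* S_min = min over all links of S_e (0 if there are no links) *)
Definition Smin : R :=
  if [pick j : T] is Some j0 then \big[Num.min/Ssig j0]_(j : T) Ssig j else 0.

Definition bucket (i : nat) : {set T} :=
  [set e | (2 ^+ i * Smin <= Ssig e) && (Ssig e < 2 ^+ i.+1 * Smin)].

End SINR.

(* Main.v *)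
Require Import Defs.
From HB Require Import structures.
From mathcomp Require Import all_boot all_order all_algebra.
From mathcomp Require Import all_classical all_reals all_analysis.
From mathcomp Require Import ring lra.
Import Order.TTheory GRing.Theory Num.Theory.
Local Open Scope ring_scope.

Lemma dist_sym (R : realType) (p q : R * R) : dist p q = dist q p.
Proof. by rewrite /dist; congr Num.sqrt; rewrite -sqrrN opprB -[X in _ + X]sqrrN opprB. Qed.

Lemma dist_ge0 (R : realType) (p q : R * R) : 0 <= dist p q.
Proof. exact: sqrtr_ge0. Qed.

Lemma dist_tri (R : realType) (p m q : R * R) : dist p q <= dist p m + dist m q.
Proof.
rewrite /dist.
set a := p.1 - m.1; set b := p.2 - m.2; set c := m.1 - q.1; set d := m.2 - q.2.
have -> : p.1 - q.1 = a + c by rewrite /a /c; ring.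
have -> : p.2 - q.2 = b + d by rewrite /b /d; ring.
set Y := a ^+ 2 + b ^+ 2; set Z := c ^+ 2 + d ^+ 2.
have Y0 : 0 <= Y by rewrite /Y; nra.
have Z0 : 0 <= Z by rewrite /Z; nra.
have hs : 0 <= Num.sqrt Y + Num.sqrt Z by rewrite addr_ge0 ?sqrtr_ge0.
rewrite -[X in _ <= X]ger0_norm // -sqrtr_sqr. rewrite ler_sqrt ?sqr_ge0 //.
have cs : a * c + b * d <= Num.sqrt Y * Num.sqrt Z.
  case: (lerP (a * c + b * d) 0) => h.
    by apply: le_trans h _; rewrite mulr_ge0 ?sqrtr_ge0.
  rewrite -sqrtrM // -[X in X <= _]ger0_norm; last exact: ltW.
  rewrite -sqrtr_sqr ler_sqrt ?mulr_ge0 //.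
  have id : Y * Z - (a * c + b * d) ^+ 2 = (a * d - b * c) ^+ 2 by rewrite /Y /Z; ring.
  have := sqr_ge0 (a * d - b * c); rewrite -id; lra.
have e1 := sqr_sqrtr Y0; have e2 := sqr_sqrtr Z0.
have -> : (Num.sqrt Y + Num.sqrt Z) ^+ 2 = Y + Z + 2 * (Num.sqrt Y * Num.sqrt Z).
  by rewrite sqrrD e1 e2 -mulr_natr; ring.
have -> : (a + c) ^+ 2 + (b + d) ^+ 2 = Y + Z + 2 * (a * c + b * d) by rewrite /Y /Z; ring.
lra.
Qed.
Lemma mle_l (R : realType) (x y : R) : Num.min x y <= x.
Proof. by rewrite ge_min lexx. Qed.
Lemma mle_r (R : realType) (x y : R) : Num.min x y <= y.
Proof. by rewrite ge_min lexx orbT. Qed.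

Lemma min_mul_le (R : realType) (x y : R) : 0 <= x -> 0 <= y ->
  Num.min 1 (x * y) <= (1 + x) * Num.min 1 y.
Proof.
move=> x0 y0; case: (lerP 1 y) => hy.
  have hm : 1 <= Num.min 1 y by rewrite le_min lexx hy.
  have := mle_l R 1 (x * y). nra.
have hm : y <= Num.min 1 y by rewrite le_min lexx (ltW hy).
have := mle_r R 1 (x * y). nra.
Qed.

Lemma pw_le (R : realType) (a x y : R) : 0 <= a -> 0 <= x -> x <= y ->
  x `^ a <= y `^ a.
Proof.
move=> a0 x0 xy; apply: (ge0_ler_powR a0) => //; rewrite nnegrE //.
exact: le_trans xy.
Qed.

Lemma geom (R : realType) (a dl d rho D : R) : 0 <= a ->
  0 < dl -> dl <= d -> 0 < rho -> 0 < D -> D <= d + 2 * rho ->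
  Num.min 1 (dl `^ a / rho `^ a) <= 3 `^ a * (d `^ a / D `^ a).
Proof.
move=> a0 dl0 dld rho0 D0 Dle.
have d0 : 0 < d by lra.
have pD : 0 < D `^ a by rewrite powR_gt0.
have prho : 0 < rho `^ a by rewrite powR_gt0.
rewrite mulrA -powRM //; last lra.
case: (lerP d rho) => h.
  apply: le_trans (mle_r _ _ _) _.
  rewrite ler_pdivrMr // mulrAC ler_pdivlMr //.
  have h1 : dl `^ a <= d `^ a by apply: pw_le => //; lra.
  have h2 : D `^ a <= (3 * rho) `^ a by apply: pw_le => //; lra.
  rewrite powRM; try lra. rewrite powRM in h2; try lra.
  have h3 : 0 <= 3 `^ a by exact: powR_ge0.
  have h4 : 0 <= d `^ a by exact: powR_ge0.
  have h5 : 0 <= dl `^ a by exact: powR_ge0.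
  nra.
apply: le_trans (mle_l _ _ _) _.
rewrite ler_pdivlMr // mul1r; apply: pw_le => //; lra.
Qed.

Theorem theorem2 (R : realType) (alpha beta eps : R) :
  0 <= alpha -> 0 < beta -> 0 < eps ->
  exists C : R,
    forall (N : R) (T : finType) (s r : T -> R * R) (P : T -> R),
      0 < N ->
      (* distinct elements of T are distinct links *)
      (forall e1 e2, s e1 = s e2 -> r e1 = r e2 -> P e1 = P e2 -> e1 = e2) ->
      (forall e, 0 < P e) ->
      (* no transmitter sits on a receiver (all distances in the model are > 0) *)
      (forall e e', 0 < dist (s e') (r e)) ->
      (* standing assumption: S_e / N >= (1 + eps) beta *)
      (forall e, (1 + eps) * beta <= Ssig alpha s r P e / N) ->
      forall (i : nat) (L : {set T}),
        L \subset bucket alpha s r P i ->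
        feasible alpha beta N s r P L ->
        forall e, e \in bucket alpha s r P i ->
          \sum_(e' in L | dlen s r e <= dlen s r e')
             abar alpha beta N s r P e e' <= C.
Proof.
move=> a0 b0 eps0.
set g := beta * (1 + eps) / eps.
have g0 : 0 <= g by rewrite /g divr_ge0 ?mulr_ge0 //; lra.
have p3 : 0 <= 3 `^ alpha by exact: powR_ge0.
set K := (1 + 2 * g) * 3 `^ alpha * 2.
have K0 : 0 <= K by rewrite /K !mulr_ge0 //; lra.
exists (1 + K / beta).
move=> N T s r P N0 _ P0 Hd Hst i L LB feas e eB.
have dpos : forall x, 0 < dlen s r x by move=> x; exact: Hd.
have pwpos : forall x : R, 0 < x -> 0 < x `^ alpha by move=> x x0; exact: powR_gt0.
have Spos : forall x, 0 < Ssig alpha s r P x.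
  by move=> x; rewrite /Ssig divr_gt0 // pwpos.
have Sint0 : forall x y, 0 <= Sint alpha s r P x y.
  by move=> x y; rewrite /Sint divr_ge0 // ?ltW // pwpos.
have bkt : forall x y, x \in bucket alpha s r P i -> y \in bucket alpha s r P i ->
    Ssig alpha s r P x <= 2 * Ssig alpha s r P y.
  move=> x y; rewrite !inE => /andP[_ hx] /andP[hy _].
  rewrite exprS -mulrA in hx; nra.
have gam : forall x, 0 <= gammae alpha beta N s r P x <= g.
  move=> x; have := Hst x; have := Spos x; rewrite /gammae.
  set S := Ssig alpha s r P x => S0 h.
  rewrite ler_pdivlMr // in h.
  have hS : 0 < S - beta * N by nra.
  apply/andP; split; first exact: divr_ge0 (mulr_ge0 (ltW b0) (ltW S0)) (ltW hS).
  rewrite ler_pdivrMr //.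
  have hk : eps * (g * (S - beta * N) - beta * S) = beta * (S - (1 + eps) * beta * N).
    by rewrite /g; field; lra.
  have : 0 <= eps * (g * (S - beta * N) - beta * S) by rewrite hk mulr_ge0 //; lra.
  rewrite pmulr_rge0 //; lra.
pose Pd := fun e' => (e' \in L) && (dlen s r e <= dlen s r e').
have C0 : 0 <= 1 + K / beta by rewrite addr_ge0 ?divr_ge0 //; lra.
case: (pickP Pd) => [j0 Hj0|none]; last first.
  by rewrite big_pred0 //.
set rho := fun x => dist (s e) (r x).
case: (@arg_minP _ _ _ j0 Pd rho Hj0) => e0 Pe0 Hmin.
rewrite (bigD1 e0) //=.
have abar1 : forall x, abar alpha beta N s r P e x <= 1 by move=> x; exact: mle_l.
have key : forall x, Pd x -> x != e0 ->
    abar alpha beta N s r P e x <= K * (Sint alpha s r P x e0 / Ssig alpha s r P e0).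
  move=> x /andP[xL dle] xne.
  have xB := fintype.subsetP LB _ xL.
  have e0B : e0 \in bucket alpha s r P i.
    by move: Pe0; rewrite /Pd => /andP[h _]; exact: (fintype.subsetP LB _ h).
  set dl := dlen s r e; set d := dlen s r x; set D := dist (s x) (r e0).
  have Dle : D <= d + 2 * rho x.
    have h1 := dist_tri _ (s x) (r x) (r e0).
    have h2 := dist_tri _ (r x) (s e) (r e0).
    have h3 : rho e0 <= rho x := Hmin x (introT andP (conj xL dle)).
    rewrite (dist_sym _ (r x) (s e)) in h2.
    rewrite /D /d /dlen; rewrite /rho in h3 *; lra.
  have G := geom _ _ _ _ _ _ a0 (dpos e) dle (Hd x e) (Hd e0 x) Dle.
  set u := dl `^ alpha / rho x `^ alpha in G.
  set w := d `^ alpha / D `^ alpha in G.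
  have u0 : 0 <= u by rewrite /u divr_ge0 // ?powR_ge0.
  have hu : Sint alpha s r P e x = Ssig alpha s r P e * u.
    rewrite /Sint /Ssig /u -/dl; field.
    by apply/andP; split; apply: lt0r_neq0; apply: pwpos; [exact: Hd | exact: dpos].
  have hw : Sint alpha s r P x e0 = Ssig alpha s r P x * w.
    rewrite /Sint /Ssig /w -/d; field.
    by apply/andP; split; apply: lt0r_neq0; apply: pwpos; [exact: Hd | exact: dpos].
  have haff : aff alpha beta N s r P e x <= (2 * g) * u.
    have -> : aff alpha beta N s r P e x =
      gammae alpha beta N s r P x * (Ssig alpha s r P e / Ssig alpha s r P x) * u.
      by rewrite /aff /ahat hu; ring.
    have := gam x; have := bkt e x eB xB; have := Spos x; have := Spos e.
    move: (Ssig alpha s r P e) (Ssig alpha s r P x) (gammae alpha beta N s r P x).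
    move=> Se Sx gx Se0 Sx0 hb /andP[gx0 gxg].
    have : Se / Sx <= 2 by rewrite ler_pdivrMr.
    have : 0 <= Se / Sx by rewrite divr_ge0 // ltW.
    move: (Se / Sx) => q q0 q2.
    have : gx * q <= 2 * g by nra.
    nra.
  have step1 : abar alpha beta N s r P e x <= (1 + 2 * g) * Num.min 1 u.
    have m1 : abar alpha beta N s r P e x <= Num.min 1 ((2 * g) * u).
      rewrite /abar le_min mle_l /=.
      exact: le_trans (mle_r _ _ _) haff.
    apply: le_trans m1 (min_mul_le _ _ _ _ u0).
    by rewrite mulr_ge0 //; lra.
  have w0 : 0 <= w by rewrite /w divr_ge0 // ?powR_ge0.
  have hw2 : w <= 2 * (Sint alpha s r P x e0 / Ssig alpha s r P e0).
    rewrite hw.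
    have := bkt e0 x e0B xB; have := Spos x; have := Spos e0.
    move: (Ssig alpha s r P e0) (Ssig alpha s r P x) w0; clear hw G hu step1 haff.
    move: w => w' S0 Sx w0' S00 Sx0 hb.
    have -> : 2 * (Sx * w' / S0) = (2 * Sx * w') / S0 by ring.
    rewrite ler_pdivlMr //.
    have := ler_wpM2r w0' hb; lra.
  apply: le_trans step1 _.
  have -> : K * (Sint alpha s r P x e0 / Ssig alpha s r P e0) =
    (1 + 2 * g) * (3 `^ alpha * (2 * (Sint alpha s r P x e0 / Ssig alpha s r P e0))).
    by rewrite /K; ring.
  apply: ler_wpM2l; first lra.
  apply: le_trans G _; apply: ler_wpM2l => //.
have e0L : e0 \in L by move: Pe0; rewrite /Pd => /andP[].
have fe := feas e0 e0L.
set S0 := Ssig alpha s r P e0 in key fe *.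
set Sig := \sum_(e' in L | e' != e0) Sint alpha s r P e' e0 in fe.
have Sig0 : 0 <= Sig by rewrite /Sig sumr_ge0 // => j _; exact: Sint0.
have S00 : 0 < S0 := Spos e0.
rewrite ler_pdivlMr in fe; last lra.
have hsum : \sum_(i0 | (i0 \in L) && (dlen s r e <= dlen s r i0) && (i0 != e0))
    abar alpha beta N s r P e i0 <= K * (Sig / S0).
  rewrite /Sig mulr_suml mulr_sumr big_mkcond [X in _ <= X]big_mkcond /=.
  apply: ler_sum => j _.
  case: ifP => h.
    case/andP: h => /andP[jL jd] jn; rewrite jL jn /=.
    have := key j (introT andP (conj jL jd)) jn; rewrite mulrA.
    by rewrite mulrAC.
  case: ifP => // _; rewrite mulr_ge0 // divr_ge0 // ?Sint0 // ltW.
have h1 := abar1 e0.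
have : K * (Sig / S0) <= K / beta.
  apply: ler_wpM2l => //.
  rewrite ler_pdivrMr // mulrC ler_pdivlMr //; nra.
lra.
Qed.
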